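(* Let $\mathcal{M}^\times$ be the product MDPST of an MDPST $\mathcal{M}$ and an LDBA $\mathcal{A}$, with accepting states $\mathtt{Acc}^\times$, and let $W^\times$ be the set computed by the procedure in the context. Then $W^\times$ is a winning region of $\mathcal{M}^\times$: for every state $x\in W^\times$ there exists a strategy $\sigma^\times$ of $\mathcal{M}^\times$ starting at $x$ such that, for every nature $\gamma^\times$, the probability that the generated path visits $\mathtt{Acc}^\times$ infinitely often equals $1$. Consequently, $\max_{\sigma^\times}\min_{\gamma^\times}\Pr(\lozenge\square W^\times)=\max_{\sigma^\times}\min_{\gamma^\times}\Pr(\lozenge W^\times)$ from the initial state.
   Context: **MDPST.** A Markov decision process with set-valued transitions is $\mathcal{M}=(S,s_0,A,\mathcal{F},\mathcal{T},\mathcal{L})$: $S$ finite set of states, $s_0\in S$, $A$ finite set of actions, $\mathcal{F}:S\times A\to 2^{2^S}$ a partial function giving for each state-action pair a set of target sets, $\mathcal{T}:S\times A\times 2^S\to(0,1]$ with $\mathcal{T}(s,a,\Theta)$ the probability of moving to the set $\Theta\in\mathcal{F}(s,a)$ (these sum to 1 over $\Theta\in\mathcal{F}(s,a)$), and $\mathcal{L}:S\to 2^{\mathrm{Prop}}$ a labelling. $A(s)$ denotes the actions applicable at $s$. ${\sf Post}(s,a)=\{s'\mid\exists\Theta\in\mathcal{F}(s,a),\ \mathcal{T}(s,a,\Theta)>0,\ s'\in\Theta\}$. A path is an alternating sequence $s_0a_0s_1a_1\cdots$ with $a_i\in A(s_i)$ and $s_{i+1}\in\Theta_i$ for some $\Theta_i\in\mathcal{F}(s_i,a_i)$.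 **Feasible distributions and natures.** For $(s,a)$ with $a\in A(s)$, a distribution $h\in\mathsf{Distr}(S)$ is feasible if there are numbers $\alpha^\Theta_{s'}\ge0$ ($\Theta\in\mathcal{F}(s,a)$, $s'\in\Theta$) with $\sum_{s'\in\Theta}\alpha^\Theta_{s'}=1$ for each $\Theta$, such that $h(s')=\sum_{\Theta\in\mathcal{F}(s,a),\,s'\in\Theta}\alpha^\Theta_{s'}\mathcal{T}(s,a,\Theta)$ for $s'\in{\sf Post}(s,a)$ and $h(s')=0$ otherwise. A strategy $\sigma$ maps each finite path $\xi$ to a distribution over $A(\mathsf{lst}(\xi))$ ($\mathsf{lst}$ = last state). A nature $\gamma$ maps each finite path $\xi$ and action $a\in A(\mathsf{lst}(\xi))$ to a feasible distribution of $(\mathsf{lst}(\xi),a)$. A strategy and a nature together induce a probability measure on infinite paths. **LDBA.** $\mathcal{A}=(Q,\Sigma,q_0,\delta,\mathtt{Acc})$ with $\Sigma=2^{\mathrm{Prop}}$, $Q=Q_i\cup Q_{acc}$ disjoint, $q_0\in Q_i$, $\mathtt{Acc}\subseteq Q_{acc}$, $\delta=\delta_i\cup\delta_j\cup\delta_{acc}$ with $\delta_i:Q_i\times\Sigma\to Q_i$, $\delta_{acc}:Q_{acc}\times\Sigma\to Q_{acc}$ deterministic and $\delta_j:Q_i\times\{\epsilon\}\to 2^{Q_{acc}}$ ($\epsilon$-jumps). **Product MDPST.** $\mathcal{M}^\times$ has states $S\times Q$, initial state $(s_0,q_0)$, actions $A\cup\{\epsilon_q\mid q\in Q\}$. For $a\in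 A(s)$: with $q'=\delta(q,\mathcal{L}(s))$, $\mathcal{F}^\times((s,q),a)=\{\Theta\times\{q'\}\mid\Theta\in\mathcal{F}(s,a)\}$ and $\mathcal{T}^\times((s,q),a,\Theta\times\{q'\})=\mathcal{T}(s,a,\Theta)$. For each $q'\in\delta_j(q,\epsilon)$, action $\epsilon_{q'}$ is applicable at $(s,q)$ with $\mathcal{F}^\times((s,q),\epsilon_{q'})=\{\{(s,q')\}\}$ with probability 1. Accepting states $\mathtt{Acc}^\times=\{(s,q)\mid q\in\mathtt{Acc}\}$. **Computation of $W^\times$.** Consider the graph on $S\times Q$ with an edge $x\to x'$ whenever $x'\in\Theta$ for some $\Theta\in\mathcal{F}^\times(x,a)$. Let $S_p$ be the set of states reachable from $(s_0,q_0)$ and from which $\mathtt{Acc}^\times$ is reachable; set $\mathrm{Acc}:=\mathtt{Acc}^\times\cap S_p$. Repeat: if $\mathrm{Acc}=\emptyset$, stop with $W^\times=\emptyset$. Otherwise build the MDPST $\hat{\mathcal{M}}$ on states $(S_p\setminus\mathrm{Acc})\cup\{x^{in}\mid x\in\mathrm{Acc}\}\cup\{x^{out}\mid x\in\mathrm{Acc}\}$: each $x^{in}$ has only a self-loop (probability 1); each $x\in S_p\setminus\mathrm{Acc}$ and each $x^{out}$ has the same actions, target sets and probabilities as $x$ in $\mathcal{M}^\times$, except that every accepting element $y\in\mathrm{Acc}$ of a target set is replaced by $y^{in}$ (target states outside $S_p$ are kept as absorbing losing states). Let $V$ be the robust maximal probability of reaching $I_{in}=\{x^{in}\}$, i.e.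 $V(z)=\max_\sigma\min_\gamma\Pr(\lozenge I_{in})$ from $z$; it is the least fixed point of $V(x^{in})=1$ and $V(z)=\max_{a}\sum_{\Theta\in\hat{\mathcal{F}}(z,a)}\hat{\mathcal{T}}(z,a,\Theta)\min_{z'\in\Theta}V(z')$. If some $x\in\mathrm{Acc}$ has $V(x^{out})<1$, remove all such $x$ from $\mathrm{Acc}$, replace $S_p$ by $\{x\in S_p\setminus\mathrm{Acc}: V(x)=1\}\cup\{x\in\mathrm{Acc}:V(x^{out})=1\}$, and repeat. Otherwise stop and output $W^\times=\{x\in S_p\setminus\mathrm{Acc}:V(x)=1\}\cup\{x\in\mathrm{Acc}:V(x^{out})=1\}$. *)

(* Defs.v *)
From HB Require Import structures.
From mathcomp Require Import boolp classical_sets reals.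
From mathcomp Require Import all_boot all_order all_algebra.
Set Implicit Arguments. Unset Strict Implicit. Unset Printing Implicit Defensive.
Import Order.TTheory GRing.Theory Num.Theory.
Local Open Scope ring_scope.

(* act s = A(s); trans s a = F(s,a) (only meaningful for a \in act s) *)
Record mdpst (R : realType) (S A : finType) := MDPST {
  init  : S;
  act   : S -> {set A};
  trans : S -> A -> {set {set S}};
  prob  : S -> A -> {set S} -> R }.

Section MDPSTdefs.
Variables (R : realType) (S A : finType) (M : mdpst R S A).

Definition wf_mdpst : Prop :=
  forall s, act M s != set0 /\
  forall a, a \in act M s ->
    [/\ trans M s a != set0,
        (forall Th, Th \in trans M s a -> Th != set0 /\ 0 < prob M s a Th <= 1) &
        \sum_(Th in trans M s a) prob M s a Th = 1].

Definition post (s : S) (a : A) : {set S} :=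
  [set s' | [exists Th in trans M s a, (0 < prob M s a Th) && (s' \in Th)]].

Definition feasible (s : S) (a : A) (h : S -> R) : Prop :=
  exists alpha : {set S} -> S -> R,
    [/\ (forall Th s', 0 <= alpha Th s'),
        (forall Th, Th \in trans M s a -> \sum_(s' in Th) alpha Th s' = 1),
        (forall s', s' \in post s a ->
           h s' = \sum_(Th in trans M s a | s' \in Th) alpha Th s' * prob M s a Th) &
        (forall s', s' \notin post s a -> h s' = 0)].

(* finite paths s0 a0 s1 ... a_{n-1} s_n : start state and list of steps *)
Definition fpath := (S * seq (A * S))%type.
Definition lst (p : fpath) : S := last p.1 (map snd p.2).

Definition strategy := fpath -> A -> R.
Definition nature := fpath -> A -> S -> R.

Definition is_strategy (sg : strategy) : Prop :=
  forall p, [/\ (forall a, 0 <= sg p a),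
                (forall a, a \notin act M (lst p) -> sg p a = 0) &
                \sum_a sg p a = 1].

Definition is_nature (ga : nature) : Prop :=
  forall p a, a \in act M (lst p) -> feasible (lst p) a (ga p a).

(* probability weight of the finite path x, t (history h already done) *)
Fixpoint weight (sg : strategy) (ga : nature) (x : S) (h t : seq (A * S)) : R :=
  match t with
  | [::] => 1
  | st :: t' => sg (x, h) st.1 * ga (x, h) st.1 st.2 * weight sg ga x (rcons h st) t'
  end.

Definition state (x : S) (t : seq (A * S)) (m : nat) : S := nth x (x :: map snd t) m.

Definition prN (sg : strategy) (ga : nature) (x : S) (n : nat)
    (E : seq (A * S) -> bool) : R :=
  \sum_(t : n.-tuple (A * S) | E t) weight sg ga x [::] t.

(* Pr(box diamond B) = inf_n sup_N Pr(exists m in [n,N], s_m in B)  *)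
Definition prBuchi (sg : strategy) (ga : nature) (x : S) (B : {set S}) : R :=
  inf (range (fun n : nat => sup (range (fun N : nat =>
    prN sg ga x N (fun t => [exists m : 'I_N.+1, (n <= m)%N && (state x t m \in B)]))))).

(* Pr(diamond box B) = sup_n inf_N Pr(forall m in [n,N], s_m in B) *)
Definition prEvAlw (sg : strategy) (ga : nature) (x : S) (B : {set S}) : R :=
  sup (range (fun n : nat => inf (range (fun N : nat =>
    prN sg ga x N (fun t => [forall m : 'I_N.+1, (n <= m)%N ==> (state x t m \in B)]))))).

(* Pr(diamond B) = sup_N Pr(exists m <= N, s_m in B) *)
Definition prEv (sg : strategy) (ga : nature) (x : S) (B : {set S}) : R :=
  sup (range (fun N : nat =>
    prN sg ga x N (fun t => [exists m : 'I_N.+1, state x t m \in B]))).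

Definition value (x : S) (f : strategy -> nature -> S -> R) : R :=
  sup (fun v : R => exists sg, is_strategy sg /\
         v = inf (fun r : R => exists ga, is_nature ga /\ r = f sg ga x)).

Definition edge : rel S :=
  fun x y => [exists a, (a \in act M x) && [exists Th, (Th \in trans M x a) && (y \in Th)]].

Definition Sp0 (Acc : {set S}) : {set S} :=
  [set x | connect edge (init M) x && [exists y in Acc, connect edge x y]].

(* value of target y in the MDPST M-hat: y^in has value 1, non accepting
   states of S_p have value V, states outside S_p are absorbing losing *)
Definition tval (Sp Acc : {set S}) (V : S -> R) (y : S) : R :=
  if y \in Acc then 1 else if y \in Sp then V y else 0.

Definition bell (val : S -> R) (x : S) : R :=
  \big[Num.max/0]_(a in act M x)
     \sum_(Th in trans M x a) prob M x a Th * \big[Num.min/1]_(y in Th) val y.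

(* V on S_p \ Acc, Vout on x^out for x in Acc *)
Definition fixedpt (Sp Acc : {set S}) (V Vout : S -> R) : Prop :=
  (forall x, x \in Sp :\: Acc -> V x = bell (tval Sp Acc V) x) /\
  (forall x, x \in Acc -> Vout x = bell (tval Sp Acc V) x).

Definition unit_valued (Sp Acc : {set S}) (V Vout : S -> R) : Prop :=
  (forall x, x \in Sp :\: Acc -> 0 <= V x <= 1) /\
  (forall x, x \in Acc -> 0 <= Vout x <= 1).

Definition is_lfp (Sp Acc : {set S}) (V Vout : S -> R) : Prop :=
  [/\ fixedpt Sp Acc V Vout, unit_valued Sp Acc V Vout &
      forall U Uout, fixedpt Sp Acc U Uout -> unit_valued Sp Acc U Uout ->
        (forall x, x \in Sp :\: Acc -> V x <= U x) /\
        (forall x, x \in Acc -> Vout x <= Uout x)].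

Definition nextSp (Sp Acc : {set S}) (V Vout : S -> R) : {set S} :=
  [set x in Sp :\: Acc | V x == 1] :|: [set x in Acc | Vout x == 1].

(* compW Sp Acc W : the loop started with (Sp, Acc) outputs W *)
Inductive compW : {set S} -> {set S} -> {set S} -> Prop :=
| compW_empty Sp Acc : Acc = set0 -> compW Sp Acc set0
| compW_stop Sp Acc V Vout : Acc != set0 -> is_lfp Sp Acc V Vout ->
    (forall x, x \in Acc -> Vout x = 1) ->
    compW Sp Acc (nextSp Sp Acc V Vout)
| compW_step Sp Acc V Vout W : Acc != set0 -> is_lfp Sp Acc V Vout ->
    (exists2 x, x \in Acc & Vout x < 1) ->
    compW (nextSp Sp Acc V Vout) [set x in Acc | Vout x == 1] W ->
    compW Sp Acc W.

Definition computeW (AccX : {set S}) (W : {set S}) : Prop :=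
  compW (Sp0 AccX) (AccX :&: Sp0 AccX) W.

End MDPSTdefs.

Record ldba (AP Qi Qa : finType) := LDBA {
  q0    : Qi;
  accQ  : {set Qa};
  d_i   : Qi -> {set AP} -> Qi;
  d_acc : Qa -> {set AP} -> Qa;
  d_j   : Qi -> {set Qa} }.

Section Product.
Variables (R : realType) (S A AP Qi Qa : finType).
Variables (M : mdpst R S A) (L : S -> {set AP}) (B : ldba AP Qi Qa).

Definition Q : finType := (Qi + Qa)%type.

Definition delta (q : Q) (l : {set AP}) : Q :=
  match q with inl qi => inl (d_i B qi l) | inr qa => inr (d_acc B qa l) end.

(* actions A + {eps_q | q in Q} *)
Definition pact (x : (S * Q)%type) : {set (A + Q)%type} :=
  [set (inl a : A + Q) | a in act M x.1] :|:
  match x.2 with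
  | inl qi => [set (inr (inr q') : A + Q) | q' in d_j B qi]
  | inr _ => set0
  end.

Definition ptrans (x : (S * Q)%type) (b : A + Q) : {set {set (S * Q)%type}} :=
  match b with
  | inl a => [set setX Th [set delta x.2 (L x.1)] | Th in trans M x.1 a]
  | inr q' => if b \in pact x then [set [set (x.1, q')]] else set0
  end.

Definition pprob (x : (S * Q)%type) (b : A + Q) (Th' : {set (S * Q)%type}) : R :=
  match b with
  | inl a => prob M x.1 a [set s | (s, delta x.2 (L x.1)) \in Th']
  | inr _ => 1
  end.

Definition product : mdpst R (S * Q)%type (A + Q)%type :=
  MDPST (init M, inl (q0 B)) pact ptrans pprob.

Definition accX : {set (S * Q)%type} :=
  [set x | if x.2 is inr qa then qa \in accQ B else false].

End Product.
Arguments accX {S AP Qi Qa} B.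

(* Main.v *)
Require Import Defs.
From HB Require Import structures.
From mathcomp Require Import boolp classical_sets reals.
From mathcomp Require Import all_boot all_order all_algebra.
From mathcomp Require Import lra.
Import Order.TTheory GRing.Theory Num.Theory.
Local Open Scope ring_scope.
Set Implicit Arguments. Unset Strict Implicit. Unset Printing Implicit Defensive.

Section Feas.
Variables (R : realType) (S A : finType) (M : mdpst R S A).
Hypothesis wfM : wf_mdpst M.

Lemma trans_sub_post s a Th : a \in act M s -> Th \in trans M s a -> Th \subset post M s a.
Proof.
move=> aA ThT; apply/subsetP => s' s'Th; rewrite inE; apply/existsP; exists Th.
have [_ /(_ a aA) [_ /(_ Th ThT) [_ /andP[p0 _]] _]] := wfM s.
by rewrite ThT p0 s'Th.
Qed.

Lemma feasible_sum1 s a h : a \in act M s -> feasible M s a h -> \sum_s' h s' = 1.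
Proof.
move=> aA [al [al0 al1 hpost hout]].
have [_ /(_ a aA) [_ _ psum]] := wfM s.
rewrite (bigID (fun s' => s' \in post M s a)) /= [X in _ + X]big1 ?addr0; last first.
  by move=> s' /hout.
rewrite (eq_bigr _ hpost).
under eq_bigr do rewrite big_mkcond /=.
rewrite exchange_big /= -psum.
rewrite (bigID (fun j => j \in trans M s a)) /= [X in _ + X]big1 ?addr0; last first.
  by move=> j /negbTE jT; apply: big1 => i _; rewrite jT.
apply: eq_bigr => Th ThT; rewrite ThT /= -big_mkcondr /= -mulr_suml.
have sub := trans_sub_post aA ThT.
rewrite (eq_bigl (fun i => i \in Th)) ?al1 ?mul1r // => i.
by apply/andP/idP => [[]|iT] //; split=> //; apply: (subsetP sub).
Qed.

Lemma feasible_ge0 s a h s' : a \in act M s -> feasible M s a h -> 0 <= h s'.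
Proof.
move=> aA [al [al0 al1 hpost hout]].
have [_ /(_ a aA) [_ hp _]] := wfM s.
case: (boolP (s' \in post M s a)) => [/hpost ->|/hout -> //].
apply: sumr_ge0 => Th /andP[ThT _]; apply: mulr_ge0 => //.
by have [_ /andP[/ltW]] := hp Th ThT.
Qed.

Lemma feasible_out s a h s' : feasible M s a h -> s' \notin post M s a -> h s' = 0.
Proof. by move=> [al [_ _ _ hout]] /hout. Qed.

End Feas.

Section Prob.
Variables (R : realType) (S A : finType) (M : mdpst R S A).
Hypothesis wfM : wf_mdpst M.
Variables (sg : strategy R S A) (ga : nature R S A) (x : S).
Hypotheses (sgS : is_strategy M sg) (gaN : is_nature M ga).

Definition G (h : seq (A * S)) (n : nat) (f : seq (A * S) -> R) : R :=
  \sum_(t : n.-tuple (A * S)) weight sg ga x h t * f (h ++ t).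

Lemma G0 h f : G h 0 f = f h.
Proof.
rewrite /G (big_pred1 [tuple]) /=; last by move=> t; apply/esym/eqP; apply: tuple0.
by rewrite mul1r cats0.
Qed.

Lemma GS h n f : G h n.+1 f =
  \sum_(st : A * S) sg (x, h) st.1 * ga (x, h) st.1 st.2 * G (rcons h st) n f.
Proof.
rewrite /G (reindex (fun p : (A * S) * n.-tuple (A * S) => [tuple of p.1 :: p.2])) /=; last first.
  exists (fun u : n.+1.-tuple (A * S) => (thead u, behead_tuple u)) => [[a t] _|u _] /=.
    by rewrite theadE; congr pair; apply: val_inj.
  by rewrite -tuple_eta.
under [RHS]eq_bigr do rewrite mulr_sumr.
rewrite pair_big /=; apply: eq_bigr => [[st t]] _ /=.
by rewrite cat_rcons !mulrA.
Qed.

Lemma w_ge0 h a s : 0 <= sg (x, h) a * ga (x, h) a s.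
Proof.
have [sg0 sgout _] := sgS (x, h).
case: (boolP (a \in act M (lst (x, h)))) => [aA|/sgout ->]; last by rewrite mul0r.
apply: mulr_ge0 => //. have := (feasible_ge0 wfM s aA (@gaN (x, h) a aA)). done.
Qed.

Lemma w_info h a s : sg (x, h) a * ga (x, h) a s != 0 ->
  [/\ 0 < sg (x, h) a, a \in act M (lst (x, h)) & s \in post M (lst (x, h)) a].
Proof.
have [sg0 sgout _] := sgS (x, h).
case: (boolP (a \in act M (lst (x, h)))) => [aA|/sgout ->]; last by rewrite mul0r eqxx.
case: (boolP (s \in post M (lst (x, h)) a)) => [sP|sP]; last first.
  by rewrite (feasible_out (@gaN (x, h) a aA) sP) mulr0 eqxx.
by rewrite mulf_eq0 negb_or => /andP[sgn _]; split=> //; rewrite lt_def sgn sg0.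
Qed.

Lemma w_sum h : \sum_(st : A * S) sg (x, h) st.1 * ga (x, h) st.1 st.2 = 1.
Proof.
transitivity (\sum_(a : A) \sum_(s : S) sg (x, h) a * ga (x, h) a s).
  by rewrite pair_big.
have [sg0 sgout sg1] := sgS (x, h).
rewrite -[RHS]sg1; apply: eq_bigr => a _; rewrite -mulr_sumr.
case: (boolP (a \in act M (lst (x, h)))) => [aA|/sgout ->]; last by rewrite mul0r.
by rewrite (feasible_sum1 wfM aA (@gaN (x, h) a aA)) mulr1.
Qed.

Lemma Gconst h n c : G h n (fun _ => c) = c.
Proof.
elim: n h => [|n IH] h; first by rewrite G0.
rewrite GS; under eq_bigr do rewrite IH.
by rewrite -mulr_suml w_sum mul1r.
Qed.

Lemma GB h n f g : G h n (fun t => f t - g t) = G h n f - G h n g.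
Proof. by rewrite /G -sumrB; apply: eq_bigr => t _; rewrite mulrBr. Qed.

Lemma GZ h n c f : G h n (fun t => c * f t) = c * G h n f.
Proof. by rewrite /G mulr_sumr; apply: eq_bigr => t _; rewrite mulrCA. Qed.

Lemma Gsplit h n m f : G h (n + m) f = G h n (fun h' => G h' m f).
Proof.
elim: n h => [|n IH] h; first by rewrite G0.
by rewrite addSn !GS; apply: eq_bigr => st _; rewrite IH.
Qed.

Lemma Gmono (P : seq (A * S) -> Prop)
  (Pstep : forall h a s, P h -> sg (x, h) a * ga (x, h) a s != 0 -> P (rcons h (a, s)))
  n h f g : P h -> (forall t, size t = n -> P (h ++ t) -> f (h ++ t) <= g (h ++ t)) ->
  G h n f <= G h n g.
Proof.
elim: n h => [|n IH] h Ph fg.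
  by rewrite !G0; have := fg [::]; rewrite cats0; apply.
rewrite !GS; apply: ler_sum => [[a s]] _ /=.
have [w0|wn0] := eqVneq (sg (x, h) a * ga (x, h) a s) 0; first by rewrite !w0 !mul0r.
apply: ler_wpM2l; first exact: w_ge0.
apply: IH; first exact: Pstep.
by move=> t st; rewrite cat_rcons; apply: fg => /=; rewrite st.
Qed.

End Prob.

Section Bell.
Variables (R : realType) (S A : finType) (M : mdpst R S A).
Hypothesis wfM : wf_mdpst M.

Definition term (val : S -> R) (y : S) (a : A) : R :=
  \sum_(Th in trans M y a) prob M y a Th * \big[Num.min/1]_(z in Th) val z.

Lemma bellE val y : bell M val y = \big[Num.max/0]_(a in act M y) term val y a.
Proof. by []. Qed.

Lemma prob01 y a Th : a \in act M y -> Th \in trans M y a -> 0 < prob M y a Th <= 1.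
Proof. by move=> aA ThT; have [_ /(_ a aA) [_ /(_ Th ThT) [_ ->] _]] := wfM y. Qed.

Lemma prob_sum y a : a \in act M y -> \sum_(Th in trans M y a) prob M y a Th = 1.
Proof. by move=> aA; have [_ /(_ a aA) [_ _ ->]] := wfM y. Qed.

Lemma min01 (val : S -> R) (Th : {set S}) : (forall z, 0 <= val z <= 1) ->
  0 <= \big[Num.min/1]_(z in Th) val z <= 1.
Proof.
move=> h01; apply/andP; split; last exact: bigmin_le_id.
by apply/bigmin_geP; split=> // z _; have /andP[] := h01 z.
Qed.

Lemma term01 val y a : (forall z, 0 <= val z <= 1) -> a \in act M y ->
  0 <= term val y a <= 1.
Proof.
move=> h01 aA; apply/andP; split.
  apply: sumr_ge0 => Th ThT; apply: mulr_ge0.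
    by have /andP[/ltW] := prob01 aA ThT.
  by have /andP[] := min01 Th h01.
rewrite -(prob_sum aA); apply: ler_sum => Th ThT.
rewrite -[X in _ <= X]mulr1; apply: ler_wpM2l.
  by have /andP[/ltW] := prob01 aA ThT.
by have /andP[] := min01 Th h01.
Qed.

Lemma bell01 val y : (forall z, 0 <= val z <= 1) -> 0 <= bell M val y <= 1.
Proof.
move=> h01; rewrite bellE; apply/andP; split.
  by apply/bigmax_geP; left.
apply/bigmax_leP; split=> // a aA.
by have /andP[] := term01 h01 aA.
Qed.

Lemma term_mono v1 v2 y a : (forall z, v1 z <= v2 z) -> a \in act M y ->
  term v1 y a <= term v2 y a.
Proof.
move=> le12 aA; apply: ler_sum => Th ThT; apply: ler_wpM2l.
  by have /andP[/ltW] := prob01 aA ThT.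
by apply: le_bigmin2 => z _; apply: le12.
Qed.

Lemma bell_mono v1 v2 y : (forall z, v1 z <= v2 z) -> bell M v1 y <= bell M v2 y.
Proof.
move=> le12; rewrite !bellE; apply: le_bigmax2 => a aA.
exact: term_mono.
Qed.

Lemma term_lt1 val y a Th z : (forall z, 0 <= val z <= 1) -> a \in act M y ->
  Th \in trans M y a -> z \in Th -> val z < 1 -> term val y a < 1.
Proof.
move=> h01 aA ThT zTh vz.
have [p0 p1] : 0 < prob M y a Th /\ prob M y a Th <= 1.
  by have /andP[] := prob01 aA ThT.
rewrite /term (bigD1 Th) //=.
have le_rest : \sum_(Th' in trans M y a | Th' != Th)
     prob M y a Th' * \big[Num.min/1]_(z0 in Th') val z0
   <= \sum_(Th' in trans M y a | Th' != Th) prob M y a Th'.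
  apply: ler_sum => Th' /andP[Th'T _]; rewrite -[X in _ <= X]mulr1.
  apply: ler_wpM2l; first by have /andP[/ltW] := prob01 aA Th'T.
  by have /andP[] := min01 Th' h01.
have := prob_sum aA; rewrite (bigD1 Th) //= => psum.
have mlt : \big[Num.min/1]_(z0 in Th) val z0 < 1.
  exact: le_lt_trans (bigmin_le_cond _ _ zTh) vz.
have : prob M y a Th * \big[Num.min/1]_(z0 in Th) val z0 < prob M y a Th.
  by rewrite -[X in _ < X]mulr1 ltr_pM2l.
by move=> hlt; have := ltr_leD hlt le_rest; rewrite psum.
Qed.

Lemma bell_eq1 val y : (forall z, 0 <= val z <= 1) -> bell M val y = 1 ->
  exists a, a \in act M y /\ forall Th, Th \in trans M y a -> forall z, z \in Th -> val z = 1.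
Proof.
move=> h01 b1.
case: (pselect (exists a, a \in act M y /\ forall Th, Th \in trans M y a -> forall z, z \in Th -> val z = 1)) => // hn.
have : bell M val y < 1.
  rewrite bellE; apply/bigmax_ltP; split=> // a aA.
  have [Th [ThT [z [zTh vz]]]] : exists Th, Th \in trans M y a /\ exists z, z \in Th /\ val z != 1.
    apply: contra_notP hn => hn; exists a; split=> // Th ThT z zTh.
    by apply/eqP; apply: contra_notT hn => hz; exists Th; split=> //; exists z.
  apply: (term_lt1 h01 aA ThT zTh).
  by rewrite lt_neqAle vz; have /andP[] := h01 z.
by rewrite b1 ltxx.
Qed.

End Bell.

Section Tarski.
Variables (R : realType) (S A : finType) (M : mdpst R S A).
Hypothesis wfM : wf_mdpst M.
Variables (Sp Acc : {set S}).

Local Notation tv := (@Defs.tval R S Sp Acc).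

Definition pre (U : S -> R) : Prop :=
  (forall z, z \in Sp :\: Acc -> 0 <= U z <= 1) /\
  (forall z, z \in Sp :\: Acc -> bell M (tv U) z <= U z).

Lemma tval01 U : (forall z, z \in Sp :\: Acc -> 0 <= U z <= 1) -> forall y, 0 <= tv U y <= 1.
Proof.
move=> h y; rewrite /Defs.tval; case: ifPn => yA; first by rewrite ler01 lexx.
case: ifPn => ySp; last by rewrite lexx ler01.
by apply: h; rewrite inE yA.
Qed.

Lemma tval_mono U1 U2 : (forall z, z \in Sp :\: Acc -> U1 z <= U2 z) ->
  forall y, tv U1 y <= tv U2 y.
Proof.
move=> h y; rewrite /Defs.tval; case: ifPn => yA //; case: ifPn => ySp //.
by apply: h; rewrite inE yA.
Qed.

Lemma lfp_le_pre V Vout U : is_lfp M Sp Acc V Vout -> pre U ->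
  forall z, z \in Sp :\: Acc -> V z <= U z.
Proof.
move=> [_ _ lfpV] preU.
pose E z : set R := fun r : R => exists U', pre U' /\ r = U' z.
pose Ust z := inf (E z).
have pre1 : pre (fun _ => 1).
  split=> z _; first by rewrite ler01 lexx.
  have h1 : forall z, z \in Sp :\: Acc -> 0 <= (fun _ : S => 1 : R) z <= 1.
    by move=> ? _; rewrite ler01 lexx.
  by have /andP[] := bell01 wfM z (tval01 h1).
have Ene z : nonempty (E z) by exists 1; exists (fun _ => 1).
have Elb z : z \in Sp :\: Acc -> has_lbound (E z).
  move=> zS; exists 0 => r [U' [[h _] ->]]; by have /andP[] := h z zS.
have Ust_le z U' : z \in Sp :\: Acc -> pre U' -> Ust z <= U' z.
  by move=> zS pU'; apply: (ge_inf (Elb z zS)); exists U'.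
have Ust01 : forall z, z \in Sp :\: Acc -> 0 <= Ust z <= 1.
  move=> z zS; apply/andP; split; last exact: (Ust_le z _ zS pre1).
  by apply: lb_le_inf => // r [U' [[h _] ->]]; have /andP[] := h z zS.
have preUst : pre Ust.
  split=> // z zS; apply: lb_le_inf => // r [U' [pU' ->]].
  apply: le_trans (proj2 pU' z zS); apply: (bell_mono wfM) => y.
  by apply: tval_mono => w wS; apply: Ust_le.
have fixUst : forall z, z \in Sp :\: Acc -> Ust z = bell M (tv Ust) z.
  move=> z zS; apply/eqP; rewrite eq_le (proj2 preUst z zS) andbT.
  apply: Ust_le => //; split=> w wS.
    by have := bell01 wfM w (tval01 Ust01).
  apply: (bell_mono wfM) => y; apply: tval_mono => v vS.
  exact: (proj2 preUst v vS).
have := lfpV Ust (fun z => bell M (tv Ust) z).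
case.
- by split=> // z zS; apply: fixUst.
- split=> // z _; by have := bell01 wfM z (tval01 Ust01).
move=> h _ z zS; apply: le_trans (h z zS) _; exact: Ust_le.
Qed.
End Tarski.

Section Attr.
Variables (R : realType) (S A : finType) (M : mdpst R S A).
Hypothesis wfM : wf_mdpst M.
Variables (Sp Acc : {set S}) (V Vout : S -> R).
Hypotheses (lfp : is_lfp M Sp Acc V Vout) (Vout1 : forall x, x \in Acc -> Vout x = 1).

Local Notation tv := (@Defs.tval R S Sp Acc).
Local Notation W := (nextSp Sp Acc V Vout).

Lemma inW y : (y \in W) = (y \in Acc) || ((y \in Sp :\: Acc) && (V y == 1)).
Proof.
rewrite /nextSp !inE; case yA: (y \in Acc) => /=; last by rewrite orbF.
by rewrite Vout1 // eqxx.
Qed.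

Lemma V01 z : z \in Sp :\: Acc -> 0 <= V z <= 1.
Proof. by case: lfp => _ [h _] _; apply: h. Qed.

Lemma tvV01 y : 0 <= tv V y <= 1.
Proof. exact: (tval01 V01 y). Qed.

Lemma tvV1 y : (tv V y == 1) = (y \in W).
Proof.
rewrite inW /Defs.tval; case: ifPn => yA; first by rewrite eqxx.
rewrite inE yA /=; case: ifPn => // _; by rewrite eq_sym oner_eq0.
Qed.

Lemma W_bell y : y \in W -> bell M (tv V) y = 1.
Proof.
case: lfp => [[fixV fixO] _ _].
rewrite inW => /orP[yA|/andP[yS /eqP Vy]]; first by rewrite -fixO // Vout1.
by rewrite -fixV.
Qed.

Lemma W_good y : y \in W -> exists a, a \in act M y /\
  forall Th, Th \in trans M y a -> Th \subset W.
Proof.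
move=> /W_bell /(bell_eq1 wfM tvV01) [a [aA h]]; exists a; split=> // Th ThT.
by apply/subsetP => z zTh; rewrite -tvV1 (h Th ThT z zTh).
Qed.

Definition goodb a y := (a \in act M y) && [forall Th in trans M y a, Th \subset W].

Definition Phi (E : {set S}) : {set S} := E :|: [set y in W |
  [exists a, goodb a y && [exists Th in trans M y a, Th \subset Acc :|: E]]].

Definition Ek k := iter k Phi set0.

Lemma Ek_sub k : Ek k \subset Ek k.+1.
Proof. exact: subsetUl. Qed.

Lemma Ek_mono k m : (k <= m)%N -> Ek k \subset Ek m.
Proof.
elim: m => [|m IH]; first by rewrite leqn0 => /eqP ->.
rewrite leq_eqVlt => /orP[/eqP ->//|]; rewrite ltnS => /IH h.
exact: subset_trans h (Ek_sub m).
Qed.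

Lemma Ek_W k : Ek k \subset W.
Proof.
elim: k => [|k IH]; first exact: sub0set.
rewrite /Ek /= -/(Ek k) /Phi subUset IH /=.
by apply/subsetP => y; rewrite inE => /andP[].
Qed.

Lemma Ek_stable : Phi (Ek #|S|) = Ek #|S|.
Proof.
have H n : (n <= #|Ek n|)%N \/ exists2 k, (k < n)%N & Ek k.+1 = Ek k.
  elim: n => [|n [IH|[k kn ek]]]; first by left.
  - have [e|ne] := eqVneq (Ek n.+1) (Ek n); first by right; exists n.
    left; apply: leq_ltn_trans IH _ ; apply: proper_card.
    by rewrite properEneq eq_sym ne Ek_sub.
  - by right; exists k => //; apply: ltnW.
have [|[k kn ek]] := H #|S|.+1.
  by rewrite ltnNge max_card.
have stab m : (k <= m)%N -> Ek m = Ek k.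
  elim: m => [|m IH]; first by rewrite leqn0 => /eqP ->.
  rewrite leq_eqVlt => /orP[/eqP ->//|]; rewrite ltnS => /IH em.
  have -> : Ek m.+1 = Phi (Ek m) by [].
  rewrite em; exact: ek.
rewrite ltnS in kn.
have e1 : Ek #|S|.+1 = Ek k by apply: stab; apply: (leq_trans kn).
have -> : Phi (Ek #|S|) = Ek #|S|.+1 by [].
by rewrite e1 stab.
Qed.


Lemma notPhi y a Th : y \in W -> y \notin Ek #|S| -> goodb a y -> Th \in trans M y a ->
  exists z, [/\ z \in Th, z \in W, z \notin Acc & z \notin Ek #|S|].
Proof.
move=> yW yE ga ThT.
have : y \notin Phi (Ek #|S|) by rewrite Ek_stable.
rewrite /Phi in_setU negb_or inE yW /= => /andP[_ /existsPn /(_ a)].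
rewrite ga /= => /existsPn /(_ Th); rewrite ThT /= => /subsetPn [z zTh].
rewrite in_setU negb_or => /andP[zA zE]; exists z; split=> //.
by move: ga => /andP[_ /forallP /(_ Th)]; rewrite ThT /= => /subsetP; apply.
Qed.

Lemma W_sub_E : W \subset Ek #|S|.
Proof.
apply/subsetP => y0 y0W; apply/negPn/negP => y0E.
have [y1 [y1W y1A y1E]] : exists y1, [/\ y1 \in W, y1 \notin Acc & y1 \notin Ek #|S|].
  have [a [aA hTh]] := W_good y0W.
  have ga : goodb a y0 by rewrite /goodb aA; apply/forallP => Th; apply/implyP; apply: hTh.
  have [_ /(_ a aA) [/set0Pn [Th ThT] _ _]] := wfM y0.
  have [z [_ zW zA zE]] := notPhi y0W y0E ga ThT.
  by exists z.
pose c := \big[Num.max/0]_(y : S) \big[Num.max/0]_(a in act M y | ~~ goodb a y) term M (tv V) y a.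
have c0 : 0 <= c by apply/bigmax_geP; left.
have c1 : c < 1.
  apply/bigmax_ltP; split=> // y _; apply/bigmax_ltP; split=> // a /andP[aA ng].
  move: ng; rewrite /goodb aA /= => /forallPn [Th]; rewrite negb_imply => /andP[ThT /subsetPn [z zTh zW]].
  apply: (term_lt1 wfM tvV01 aA ThT zTh).
  by rewrite lt_neqAle tvV1 zW /=; have /andP[] := tvV01 z.
pose U z := if (z \in W) && (z \notin Ek #|S|) then c else V z.
have WA z : z \in W -> z \notin Acc -> z \in Sp :\: Acc /\ V z = 1.
  by rewrite inW => /orP[->//|/andP[zS /eqP]].
have UV : forall z, z \in Sp :\: Acc -> U z <= V z.
  move=> z zS; rewrite /U; case: ifPn => // /andP[zW _].
  by move: zS; rewrite inE => /andP[zA _]; have [_ ->] := WA z zW zA; apply: ltW.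
have preU : pre M Sp Acc U.
  split=> z zS.
    rewrite /U; case: ifPn => _; last exact: V01.
    by rewrite c0 (ltW c1).
  rewrite /U; case: ifPn => [/andP[zW zE]|_]; last first.
    case: lfp => [[fixV _] _ _]; rewrite [X in _ <= X]fixV //.
    by apply: (bell_mono wfM) => y; apply: tval_mono.
  rewrite bellE; apply/bigmax_leP; split=> // a aA.
  case: (boolP (goodb a z)) => gaz.
    rewrite /term -[X in _ <= X]mul1r -(prob_sum wfM aA) mulr_suml.
    apply: ler_sum => Th ThT; apply: ler_wpM2l; first by have /andP[/ltW] := prob01 wfM aA ThT.
    have [w [wTh wW wA wE]] := notPhi zW zE gaz ThT.
    apply: le_trans (bigmin_le_cond _ _ wTh) _.
    have [wS _] := WA w wW wA.
    move: wS; rewrite /Defs.tval (negbTE wA) inE wA /= => ->.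
    by rewrite /U wW wE.
  apply: le_trans (term_mono wfM _ aA) _; first by apply: tval_mono; exact: UV.
  apply: (bigmax_sup z) => //; apply: (bigmax_sup a) => //.
  by rewrite aA gaz.
have [y1S V1] := WA y1 y1W y1A.
have := lfp_le_pre wfM lfp preU y1S.
by rewrite V1 /U y1W y1E /= => /(lt_le_trans c1); rewrite ltxx.
Qed.

End Attr.

Section Help.
Variables (R : realType) (S A : finType) (M : mdpst R S A).
Hypothesis wfM : wf_mdpst M.

Lemma state_cat (x : S) (h t : seq (A * S)) m : (m <= size h)%N ->
  state x (h ++ t) m = state x h m.
Proof. by move=> mh; rewrite /state map_cat -cat_cons nth_cat /= size_map ltnS mh. Qed.

Lemma state_rcons (x : S) (h : seq (A * S)) st : state x (rcons h st) (size h).+1 = st.2.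
Proof. by rewrite /state map_rcons -rcons_cons nth_rcons /= size_map ltnn eqxx. Qed.

Lemma lst_state (x : S) (h : seq (A * S)) : lst (x, h) = state x h (size h).
Proof. by rewrite /lst /state /= -(size_map snd) -[size _]/((size (x :: map snd h)).-1) nth_last. Qed.

Lemma lst_rcons (x : S) (h : seq (A * S)) st : lst (x, rcons h st) = st.2.
Proof. by rewrite /lst /= map_rcons last_rcons. Qed.

Lemma feasible_mass y a h Th : a \in act M y -> Th \in trans M y a ->
  feasible M y a h -> prob M y a Th <= \sum_(s in Th) h s.
Proof.
move=> aA ThT [al [al0 al1 hpost hout]].
rewrite -[X in X <= _]mul1r -(al1 Th ThT) mulr_suml.
apply: ler_sum => s sTh.
have sP : s \in post M y a by apply: (subsetP (trans_sub_post wfM aA ThT)).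
rewrite (hpost s sP) (bigD1 Th) /=; last by rewrite ThT.
rewrite lerDl; apply: sumr_ge0 => Th' /andP[/andP[Th'T _] _]; apply: mulr_ge0 => //.
by have [_ /(_ a aA) [_ /(_ Th' Th'T) [_ /andP[/ltW]]]] := wfM y.
Qed.

Variables (sg : strategy R S A) (ga : nature R S A) (x : S).
Hypotheses (sgS : is_strategy M sg) (gaN : is_nature M ga).

Lemma G_ext_const h n f c : (forall t, size t = n -> f (h ++ t) = c) -> G sg ga x h n f = c.
Proof.
move=> hf; rewrite -(Gconst wfM x sgS gaN h n c) /G; apply: eq_bigr => t _.
by rewrite hf // size_tuple.
Qed.

Lemma G_ge0 h n f : (forall t, 0 <= f t) -> 0 <= G sg ga x h n f.
Proof.
move=> f0; rewrite -(Gconst wfM x sgS gaN h n 0).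
by apply: (Gmono wfM sgS gaN (P := fun _ => True)).
Qed.

Lemma G_le1 h n f : (forall t, f t <= 1) -> G sg ga x h n f <= 1.
Proof.
move=> f1; rewrite -[X in _ <= X](Gconst wfM x sgS gaN h n 1).
by apply: (Gmono wfM sgS gaN (P := fun _ => True)).
Qed.

Lemma prN_G n E : prN sg ga x n E = G sg ga x [::] n (fun t => (E t)%:R).
Proof.
rewrite /prN /G big_mkcond; apply: eq_bigr => t _ /=.
by case: (E t); rewrite ?mulr1 ?mulr0.
Qed.

End Help.

Section Win.
Variables (R : realType) (S A : finType) (M : mdpst R S A).
Hypothesis wfM : wf_mdpst M.
Variables (Sp Acc : {set S}) (V Vout : S -> R).
Hypotheses (lfp : is_lfp M Sp Acc V Vout) (Vout1 : forall x, x \in Acc -> Vout x = 1).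
Variable a0 : A.

Local Notation W := (nextSp Sp Acc V Vout).
Local Notation E := (Ek M Sp Acc V Vout).
Local Notation good := (goodb M Sp Acc V Vout).
Local Notation N := #|S|.

Definition progb a y k := good a y && [exists Th in trans M y a, Th \subset Acc :|: E k].
Definition lvl y := find (fun k => y \in E k.+1) (iota 0 N).
Definition pol y : A := odflt (odflt a0 [pick a in act M y]) [pick a | progb a y (lvl y)].
Definition sgp : strategy R S A := fun p a => (a == pol (lst p))%:R.

Lemma pol_act y : pol y \in act M y.
Proof.
rewrite /pol; case: (pickP (fun a => progb a y (lvl y))) => [a /andP[/andP[aA _] _] //|_] /=.
case: pickP => [a //|h] /=.
by have [/set0Pn [a aA] _] := wfM y; move: (h a); rewrite aA.
Qed.

Lemma sgp_strat : is_strategy M sgp.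
Proof.
move=> p; split.
- by move=> a; rewrite ler0n.
- move=> a aA; rewrite /sgp; have /negbTE -> // : a != pol (lst p).
  by apply: contraNneq aA => ->; exact: pol_act.
- by rewrite (bigD1 (pol (lst p))) //= /sgp eqxx big1 ?addr0 // => a /negbTE ->.
Qed.

Lemma pol_prog y k : (k < N)%N -> y \in E k.+1 ->
  good (pol y) y /\ exists2 Th, Th \in trans M y (pol y) & Th \subset Acc :|: E k.
Proof.
move=> kN yE.
have hs : has (fun k => y \in E k.+1) (iota 0 N).
  by apply/hasP; exists k => //; rewrite mem_iota.
have lN : (lvl y < N)%N by have := has_find (fun k => y \in E k.+1) (iota 0 N); rewrite hs size_iota.
have nl := nth_find 0 hs; rewrite -/(lvl y) nth_iota // add0n in nl.
have lk : (lvl y <= k)%N.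
  rewrite leqNgt; apply/negP => kl.
  by have := before_find 0 kl; rewrite nth_iota ?add0n ?yE // (ltn_trans kl lN).
have nE : y \notin E (lvl y).
  case e: (lvl y) => [|j]; first by rewrite inE.
  have jl : (j < lvl y)%N by rewrite e.
  have := before_find 0 jl; rewrite nth_iota ?add0n; [by move=> ->|exact: ltn_trans jl lN].
have hP : y \in Phi M Sp Acc V Vout (E (lvl y)) := nl.
move: hP; rewrite /Phi in_setU (negbTE nE) /= inE => /andP[_ /existsP [a ha]].
have pa : progb a y (lvl y) by [].
rewrite /pol; case: (pickP (fun a => progb a y (lvl y))) => [b /andP[gb /existsP[Th /andP[ThT ThS]]]|/(_ a)]; last by rewrite pa.
split=> //; exists Th => //; apply: subset_trans ThS _.
by apply: setUS; apply: Ek_mono.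
Qed.

Lemma pol_good y : y \in W -> good (pol y) y.
Proof.
move=> yW; have yE := subsetP (W_sub_E wfM lfp Vout1) y yW.
have N0 : (0 < N)%N by apply/card_gt0P; exists y.
have kN : (N.-1 < N)%N by rewrite ltn_predL.
have yE' : y \in E N.-1.+1 by rewrite prednK.
by have [] := pol_prog kN yE'.
Qed.


Definition pmin : R := \big[Num.min/1]_(y : S) \big[Num.min/1]_(a in act M y)
  \big[Num.min/1]_(Th in trans M y a) prob M y a Th.

Lemma pmin_gt0 : 0 < pmin.
Proof.
apply/bigmin_gtP; split=> // y _; apply/bigmin_gtP; split=> // a aA.
apply/bigmin_gtP; split=> // Th ThT; by have /andP[] := prob01 wfM aA ThT.
Qed.

Lemma pmin_le1 : pmin <= 1.
Proof. exact: bigmin_le_id. Qed.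

Lemma pmin_le y a Th : a \in act M y -> Th \in trans M y a -> pmin <= prob M y a Th.
Proof.
move=> aA ThT; apply: le_trans (bigmin_le_cond 1 _ (isT : xpredT y)) _ => /=.
apply: le_trans (bigmin_le_cond 1 _ aA) _ => /=.
exact: (bigmin_le_cond 1 _ ThT).
Qed.

Variables (ga : nature R S A) (x : S).
Hypothesis gaN : is_nature M ga.

Local Notation Gp := (G sgp ga x).

Lemma W_step h a s : lst (x, h) \in W -> sgp (x, h) a * ga (x, h) a s != 0 ->
  lst (x, rcons h (a, s)) \in W.
Proof.
move=> hW wn; have [sg0 aA sP] := w_info sgp_strat gaN wn.
rewrite lst_rcons /=.
have ea : a = pol (lst (x, h)).
  by move: sg0; rewrite /sgp; case: eqP => // _; rewrite ltxx.
move: sP; rewrite inE => /existsP [Th /andP[ThT /andP[_ sTh]]].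
have := pol_good hW; rewrite /goodb => /andP[_ /forallP /(_ Th)].
by rewrite -ea ThT /= => /subsetP; apply.
Qed.

Definition vis (L : nat) (t : seq (A * S)) : bool :=
  [exists m : 'I_(size t).+1, (L < m)%N && (state x t m \in Acc)].
Definition nv (n : nat) (t : seq (A * S)) : bool :=
  [forall m : 'I_(size t).+1, (n <= m)%N ==> (state x t m \notin Acc)].

Lemma vis_ext L h t : vis L h -> vis L (h ++ t).
Proof.
move=> /existsP [m /andP[Lm mA]].
have mlt : (m < (size (h ++ t)).+1)%N.
  by rewrite size_cat ltnS (leq_trans _ (leq_addr _ _)) // -ltnS.
apply/existsP; exists (Ordinal mlt); rewrite /= Lm state_cat //.
by rewrite -ltnS.
Qed.

Lemma nv_pre n h t : nv n (h ++ t) -> nv n h.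
Proof.
move=> /forallP hn; apply/forallP => m.
have mlt : (m < (size (h ++ t)).+1)%N.
  by rewrite size_cat ltnS (leq_trans _ (leq_addr _ _)) // -ltnS.
by have := hn (Ordinal mlt); rewrite /= state_cat // -ltnS.
Qed.

Lemma vis_rcons L h st : (L <= size h)%N -> st.2 \in Acc -> vis L (rcons h st).
Proof.
move=> Lh sA; have mlt : ((size h).+1 < (size (rcons h st)).+1)%N by rewrite size_rcons.
by apply/existsP; exists (Ordinal mlt); rewrite /= state_rcons sA ltnS Lh.
Qed.

Lemma vis_S L t : vis L.+1 t -> vis L t.
Proof.
move=> /existsP [m /andP[Lm mA]]; apply/existsP; exists m.
by rewrite mA (ltn_trans _ Lm).
Qed.

Lemma Gp_ge0 h n f : (forall t, 0 <= f t) -> 0 <= Gp h n f.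
Proof. exact: (G_ge0 wfM x sgp_strat gaN). Qed.

Lemma step_bound h k f Th0 b : (forall t, 0 <= f t) -> 0 <= b ->
  Th0 \in trans M (lst (x, h)) (pol (lst (x, h))) ->
  (forall s, s \in Th0 -> b <= Gp (rcons h (pol (lst (x, h)), s)) k f) ->
  b * pmin <= Gp h k.+1 f.
Proof.
move=> f0 b0 ThT hb; set y := lst (x, h); set a := pol y.
have aA : a \in act M y by apply: pol_act.
have F0 st : 0 <= sgp (x, h) st.1 * ga (x, h) st.1 st.2 * Gp (rcons h st) k f.
  by apply: mulr_ge0; [exact: (w_ge0 wfM x sgp_strat gaN)|apply: Gp_ge0].
rewrite GS.
have -> : \sum_(st : A * S) sgp (x, h) st.1 * ga (x, h) st.1 st.2 * Gp (rcons h st) k f =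
  \sum_(a' : A) \sum_(s : S) sgp (x, h) a' * ga (x, h) a' s * Gp (rcons h (a', s)) k f.
  by rewrite pair_big; apply: eq_bigr => [[a' s]].
rewrite (bigD1 a) //= -/y.
rewrite -[X in X <= _]addr0; apply: lerD; last by apply: sumr_ge0 => a' _; apply: sumr_ge0 => s _; apply: (F0 (a', s)).
rewrite (bigID (fun s => s \in Th0)) /=.
rewrite -[X in X <= _]addr0; apply: lerD; last by apply: sumr_ge0 => s _; apply: (F0 (a, s)).
have -> : sgp (x, h) a = 1 by rewrite /sgp /= eqxx.
apply: le_trans (_ : \sum_(s in Th0) ga (x, h) a s * b <= _).
  rewrite -mulr_suml [X in _ <= X]mulrC; apply: ler_wpM2l => //.
  apply: le_trans (pmin_le aA ThT) _.
  by apply: (feasible_mass wfM aA ThT); apply: gaN.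
apply: ler_sum => s sTh; rewrite mul1r; apply: ler_wpM2l; last exact: hb.
exact: (feasible_ge0 wfM s aA (@gaN (x, h) a aA)).
Qed.


Lemma reach k h : (k < N)%N -> lst (x, h) \in E k.+1 ->
  pmin ^+ k.+1 <= Gp h k.+1 (fun t => (vis (size h) t)%:R).
Proof.
have f0 L : forall t, 0 <= (vis L t)%:R :> R by move=> t; apply: ler0n.
have pm0 : 0 <= pmin by apply: ltW; apply: pmin_gt0.
elim: k h => [|k IH] h kN yE; have [_ [Th0 ThT ThS]] := pol_prog kN yE.
  rewrite expr1 -[pmin]mul1r; apply: (step_bound (f0 _) ler01 ThT) => s sTh.
  have := subsetP ThS s sTh; rewrite in_setU inE orbF => sA.
  by rewrite G0 vis_rcons.
rewrite exprS mulrC; apply: (step_bound (f0 _) (exprn_ge0 _ pm0) ThT) => s sTh.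
case/setUP: (subsetP ThS s sTh) => [sA|sE].
  rewrite (G_ext_const wfM x sgp_strat gaN (c := 1)); first exact: exprn_ile1 pm0 pmin_le1.
  by move=> t _; rewrite vis_ext ?vis_rcons.
have := IH (rcons h (pol (lst (x, h)), s)) (ltnW kN); rewrite lst_rcons => /(_ sE) h1.
apply: le_trans h1 _.
apply: (Gmono wfM sgp_strat gaN (P := fun _ => True)) => // t _ _.
rewrite size_rcons ler_nat; case: (boolP (vis _ _)) => // /vis_S ->.
by [].
Qed.

Lemma buchi n j h : lst (x, h) \in W -> (n <= size h)%N ->
  Gp h (j * N) (fun t => (nv n t)%:R) <= (1 - pmin ^+ N) ^+ j.
Proof.
have pm0 : 0 <= pmin by apply: ltW; apply: pmin_gt0.
have q1 : pmin ^+ N <= 1 := exprn_ile1 _ pm0 pmin_le1.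
have q0 : 0 <= 1 - pmin ^+ N by rewrite subr_ge0.
elim: j h => [|j IH] h hW nh.
  by rewrite mul0n G0 expr0 lern1 leq_b1.
rewrite mulSn Gsplit.
apply: le_trans (_ : Gp h N (fun h' => (1 - pmin ^+ N) ^+ j * (nv n h')%:R) <= _).
  apply: (Gmono wfM sgp_strat gaN (P := fun h => lst (x, h) \in W)) => //.
    by move=> h' a s; apply: W_step.
  move=> t st tW; case: (boolP (nv n (h ++ t))) => nvt.
    rewrite mulr1; apply: IH => //; rewrite size_cat; exact: leq_trans nh (leq_addr _ _).
  rewrite mulr0 (G_ext_const wfM x sgp_strat gaN (c := 0)) // => u _.
  by case: (boolP (nv n ((h ++ t) ++ u))) => // /nv_pre; rewrite (negbTE nvt).
rewrite GZ exprS [X in _ <= X]mulrC; apply: ler_wpM2l; first exact: exprn_ge0.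
apply: le_trans (_ : Gp h N (fun t => 1 - (vis (size h) t)%:R) <= _).
  apply: (Gmono wfM sgp_strat gaN (P := fun _ => True)) => // t _ _.
  case: (boolP (nv n (h ++ t))) => nvt; last by rewrite subr_ge0 lern1 leq_b1.
  case: (boolP (vis _ _)) => [/existsP [m /andP[hm mA]]|]; last by rewrite subr0.
  move/forallP: nvt => /(_ m); rewrite mA implybF -ltnNge => mn.
  by have := leq_ltn_trans nh hm; rewrite ltnNge (ltnW mn).
rewrite GB (Gconst wfM x sgp_strat gaN) lerD2l lerN2.
have N0 : (0 < N)%N by apply/card_gt0P; exists (lst (x, h)).
have kN : (N.-1 < N)%N by rewrite ltn_predL.
have yE : lst (x, h) \in E N.-1.+1.
  by rewrite prednK //; apply: (subsetP (W_sub_E wfM lfp Vout1)).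
by have := reach kN yE; rewrite prednK.
Qed.

End Win.

Section SupInf.
Variable R : realType.

Lemma pow_small (r e : R) : 0 <= r < 1 -> 0 < e -> exists j : nat, r ^+ j < e.
Proof.
move=> /andP[r0 r1] e0; set q := 1 - r.
have q0 : 0 < q by rewrite subr_gt0.
have key j : r ^+ j * (1 + j%:R * q) <= 1.
  elim: j => [|j IH]; first by rewrite expr0 mul0r addr0 mulr1.
  have a0 : 0 <= r ^+ j by apply: exprn_ge0.
  have b0 : 0 <= j%:R :> R by apply: ler0n.
  rewrite exprS -natr1.
  move: IH a0 b0 q0; rewrite /q; set a := r ^+ j; set b := j%:R => IH a0 b0 q0.
  have h : 0 <= a * ((1 - r) * (1 - r)) * (b + 1).
    by apply: mulr_ge0; [apply: mulr_ge0 => //; apply: mulr_ge0; apply: ltW|apply: addr_ge0].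
  nra.
pose j := Num.Def.archi_bound ((e * q)^-1).
exists j.
have ejq : (e * q)^-1 < j%:R by apply: archi_boundP; rewrite invr_ge0 mulr_ge0 // ltW.
have := key j; set a := r ^+ j => ka.
have a0 : 0 <= a by apply: exprn_ge0.
have eq0 : 0 < e * q by apply: mulr_gt0.
have : (e * q)^-1 * (e * q) < j%:R * (e * q) by rewrite ltr_pM2r.
rewrite mulVf ?gt_eqF // => h1.
have jq0 : 0 <= j%:R * q by apply: mulr_ge0; [apply: ler0n|apply: ltW].
move: h1 ka jq0; set b := j%:R * q => h1 ka jq0.
have h2 : 1 < e * b by rewrite /b mulrCA.
rewrite ltNge; apply/negP => ea.
have : e * b <= a * b by apply: ler_wpM2r.
nra.
Qed.


Lemma range_ub (u : nat -> R) c : (forall n, u n <= c) -> sup (range u) <= c.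
Proof. by move=> h; apply: ge_sup; [exists (u 0%N); exists 0%N|move=> r [n _ <-]]. Qed.

Lemma le_sup_range (u : nat -> R) c n : (forall n, u n <= c) -> u n <= sup (range u).
Proof.
move=> h; apply: ub_le_sup; last by exists n.
by exists c => r [m _ <-].
Qed.

Lemma range_lb (u : nat -> R) c : (forall n, c <= u n) -> c <= inf (range u).
Proof. by move=> h; apply: lb_le_inf; [exists (u 0%N); exists 0%N|move=> r [n _ <-]]. Qed.

Lemma inf_le_range (u : nat -> R) c n : (forall n, c <= u n) -> inf (range u) <= u n.
Proof.
move=> h; apply: ge_inf; last by exists n.
by exists c => r [m _ <-].
Qed.

Lemma sup_eq1 (u : nat -> R) : (forall n, u n <= 1) ->
  (forall e, 0 < e -> exists n, 1 - e < u n) -> sup (range u) = 1.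
Proof.
move=> h1 he; apply/eqP; rewrite eq_le range_ub //=.
rewrite leNgt; apply/negP => hs.
have e0 : 0 < 1 - sup (range u) by rewrite subr_gt0.
have [n hn] := he _ e0.
have := le_sup_range n h1.
move: hn; set s := sup (range u) => hn hsn.
lra.
Qed.

Lemma inf_eq1 (u : nat -> R) : (forall n, u n = 1) -> inf (range u) = 1.
Proof.
move=> h; apply/eqP; rewrite eq_le.
rewrite (le_trans (inf_le_range 0%N (c := 1) _)) ?h //=; last by move=> n; rewrite h.
by apply: range_lb => n; rewrite h.
Qed.

End SupInf.

Section WinFinal.
Variables (R : realType) (S A : finType) (M : mdpst R S A).
Hypothesis wfM : wf_mdpst M.
Variables (Sp Acc : {set S}) (V Vout : S -> R).
Hypotheses (lfp : is_lfp M Sp Acc V Vout) (Vout1 : forall x, x \in Acc -> Vout x = 1).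
Variable a0 : A.
Variables (ga : nature R S A) (x : S) (AccX : {set S}).
Hypotheses (gaN : is_nature M ga) (AccS : Acc \subset AccX) (xW : x \in nextSp Sp Acc V Vout).

Local Notation sg := (sgp M Sp Acc V Vout a0).
Local Notation sgS := (sgp_strat wfM Sp Acc V Vout a0).

Theorem win_buchi : prBuchi sg ga x AccX = 1.
Proof.
rewrite /prBuchi; apply: inf_eq1 => n; apply: sup_eq1.
  by move=> N; rewrite prN_G; apply: (G_le1 wfM x sgS gaN) => t; rewrite lern1 leq_b1.
move=> e e0.
set r := 1 - pmin M ^+ #|S|.
have pm0 : 0 < pmin M by apply: pmin_gt0.
have q1 : pmin M ^+ #|S| <= 1 by apply: exprn_ile1; [apply: ltW|apply: pmin_le1].
have r01 : 0 <= r < 1 by rewrite /r subr_ge0 q1 /= ltrBlDr ltrDl exprn_gt0.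
have [j rj] := pow_small r01 e0.
exists (n + j * #|S|)%N; rewrite prN_G.
apply: lt_le_trans (_ : 1 - r ^+ j <= _); first by lra.
apply: (@le_trans _ _ (G sg ga x [::] (n + j * #|S|) (fun t => 1 - (nv Acc x n t)%:R))).
  rewrite GB (Gconst wfM x sgS gaN) lerD2l lerN2 Gsplit.
  rewrite -[X in _ <= X](Gconst wfM x sgS gaN [::] n).
  apply: (Gmono wfM sgS gaN (P := fun h => lst (x, h) \in nextSp Sp Acc V Vout)) => //.
    by move=> h a s; apply: (W_step wfM lfp Vout1 gaN).
  move=> t st tW; apply: (buchi wfM lfp Vout1 a0 gaN) => //.
  by rewrite st.
apply: (Gmono wfM sgS gaN (P := fun _ => True)) => // t st _.
case: (boolP (nv Acc x n _)) => nvt; first by rewrite subrr ler0n.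
rewrite subr0 ler1n lt0b.
move: nvt; rewrite negb_forall => /existsP [m]; rewrite negb_imply negbK => /andP[nm mA].
have mlt : (m < (n + j * #|S|).+1)%N by rewrite -st /= ltn_ord.
apply/existsP; exists (Ordinal mlt); rewrite /= nm /=.
exact: (subsetP AccS).
Qed.

End WinFinal.

Lemma G_eq_ext (R : realType) (S A : finType) (sg : strategy R S A) (ga : nature R S A) x h n f g :
  (forall t, size t = n -> f (h ++ t) = g (h ++ t)) -> G sg ga x h n f = G sg ga x h n g.
Proof. by move=> e; apply: eq_bigr => t _; rewrite e // size_tuple. Qed.

Section Val.
Variables (R : realType) (S A : finType) (M : mdpst R S A).
Hypothesis wfM : wf_mdpst M.

Lemma exist_a0 : exists a0 : A, true.
Proof. by have [/set0Pn [a _] _] := wfM (init M); exists a. Qed.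

Lemma exist_strat : exists sg, is_strategy M sg.
Proof.
have [a0 _] := exist_a0.
by exists (sgp M set0 set0 (fun _ => 0) (fun _ => 0) a0); apply: sgp_strat.
Qed.

Definition alpha0 (Th : {set S}) (s' : S) : R :=
  if [pick z in Th] is Some z then (s' == z)%:R else 0.

Definition nat0 : nature R S A := fun p a s' =>
  if s' \in post M (lst p) a then
    \sum_(Th in trans M (lst p) a | s' \in Th) alpha0 Th s' * prob M (lst p) a Th
  else 0.

Lemma nat0_nature : is_nature M nat0.
Proof.
move=> p a aA; exists alpha0; split.
- by move=> Th s'; rewrite /alpha0; case: pickP => [z _|_]; rewrite ?ler0n.
- move=> Th ThT; have [_ /(_ a aA) [_ /(_ Th ThT) [ne _] _]] := wfM (lst p).
  rewrite /alpha0; case: pickP => [z zTh|h]; last first.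
    by move/set0Pn: ne => [z zTh]; move: (h z) => /negbT /negP [].
  rewrite (bigD1 z) //= eqxx big1 ?addr0 // => s' /andP[_ /negbTE ->] //.
- by move=> s' sP; rewrite /nat0 sP.
- by move=> s' sP; rewrite /nat0 (negbTE sP).
Qed.

Lemma exist_nature : exists ga, is_nature M ga.
Proof. by exists nat0; apply: nat0_nature. Qed.

Lemma prN01 sg ga x n E : is_strategy M sg -> is_nature M ga ->
  0 <= prN sg ga x n E <= 1.
Proof.
move=> sgS gaN; rewrite prN_G; apply/andP; split.
  by apply: (G_ge0 wfM x sgS gaN) => t; apply: ler0n.
by apply: (G_le1 wfM x sgS gaN) => t; rewrite lern1 leq_b1.
Qed.

Lemma sup01 (u : nat -> R) : (forall n, 0 <= u n <= 1) -> 0 <= sup (range u) <= 1.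
Proof.
move=> h; apply/andP; split; last by apply: range_ub => n; have /andP[] := h n.
apply: le_trans (_ : u 0%N <= _); first by have /andP[] := h 0%N.
by apply: (le_sup_range (c := 1)) => n; have /andP[] := h n.
Qed.

Lemma inf01 (u : nat -> R) : (forall n, 0 <= u n <= 1) -> 0 <= inf (range u) <= 1.
Proof.
move=> h; apply/andP; split; first by apply: range_lb => n; have /andP[] := h n.
apply: le_trans (_ : _ <= u 0%N) _; last by have /andP[] := h 0%N.
by apply: (inf_le_range (c := 0)) => n; have /andP[] := h n.
Qed.

Lemma prEv01 sg ga x W : is_strategy M sg -> is_nature M ga -> 0 <= prEv sg ga x W <= 1.
Proof. by move=> sgS gaN; apply: sup01 => N; apply: prN01. Qed.

Lemma prEvAlw01 sg ga x W : is_strategy M sg -> is_nature M ga -> 0 <= prEvAlw sg ga x W <= 1.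
Proof. by move=> sgS gaN; apply: sup01 => n; apply: inf01 => N; apply: prN01. Qed.

Definition Inf (f : strategy R S A -> nature R S A -> S -> R) sg x : R :=
  inf (fun r : R => exists ga, is_nature M ga /\ r = f sg ga x).

Section ValueEq.
Variables (f g : strategy R S A -> nature R S A -> S -> R) (x : S).
Hypotheses (f01 : forall sg ga, is_strategy M sg -> is_nature M ga -> 0 <= f sg ga x <= 1)
           (g01 : forall sg ga, is_strategy M sg -> is_nature M ga -> 0 <= g sg ga x <= 1).

Lemma Inf_le (h : strategy R S A -> nature R S A -> S -> R) sg ga :
  (forall ga, is_nature M ga -> 0 <= h sg ga x) -> is_nature M ga -> Inf h sg x <= h sg ga x.
Proof.
move=> h0 gaN; apply: ge_inf; last by exists ga.
by exists 0 => r [ga' [gaN' ->]]; apply: h0.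
Qed.

Lemma Inf_mono (h1 h2 : strategy R S A -> nature R S A -> S -> R) sg1 sg2 :
  (forall ga, is_nature M ga -> 0 <= h1 sg1 ga x) ->
  (forall ga, is_nature M ga -> h1 sg1 ga x <= h2 sg2 ga x) ->
  Inf h1 sg1 x <= Inf h2 sg2 x.
Proof.
move=> h0 le12; apply: lb_le_inf.
  by have [ga gaN] := exist_nature; exists (h2 sg2 ga x); exists ga.
move=> r [ga [gaN ->]]; apply: le_trans (le12 ga gaN).
exact: Inf_le.
Qed.

Lemma Inf01 h sg : is_strategy M sg ->
  (forall sg ga, is_strategy M sg -> is_nature M ga -> 0 <= h sg ga x <= 1) ->
  0 <= Inf h sg x <= 1.
Proof.
move=> sgS h01; have [ga gaN] := exist_nature; apply/andP; split.
  apply: lb_le_inf; first by exists (h sg ga x); exists ga.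
  by move=> r [ga' [gaN' ->]]; have /andP[] := h01 _ _ sgS gaN'.
apply: le_trans (Inf_le _ gaN) _.
  by move=> ga' gaN'; have /andP[] := h01 _ _ sgS gaN'.
by have /andP[] := h01 _ _ sgS gaN.
Qed.

Lemma value_le :
  (forall sg, is_strategy M sg -> exists2 sg', is_strategy M sg' &
     forall ga, is_nature M ga -> f sg ga x <= g sg' ga x) ->
  value M x f <= value M x g.
Proof.
move=> hfg; apply: ge_sup.
  by have [sg sgS] := exist_strat; exists (Inf f sg x); exists sg.
move=> v [sg [sgS ->]]; have [sg' sgS' le_fg] := hfg sg sgS.
apply: le_trans (_ : Inf g sg' x <= _).
  apply: Inf_mono => // ga gaN; by have /andP[] := f01 sgS gaN.
apply: ub_le_sup; last by exists sg'.
by exists 1 => r [sg'' [sgS'' ->]]; have /andP[] := Inf01 sgS'' g01.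
Qed.

End ValueEq.
End Val.

Section Alw.
Variables (R : realType) (S A : finType) (M : mdpst R S A).
Hypothesis wfM : wf_mdpst M.
Variable W : {set S}.
Hypothesis Wc : forall y, y \in W -> exists a, a \in act M y /\
  forall Th, Th \in trans M y a -> Th \subset W.
Variable a0 : A.

Definition goodW a y := (a \in act M y) && [forall Th in trans M y a, Th \subset W].
Definition stay y : A := odflt (odflt a0 [pick a in act M y]) [pick a | goodW a y].
Definition visited (p : Defs.fpath S A) : bool := [exists m : 'I_(size p.2).+1, state p.1 p.2 m \in W].
Definition sgW (sg : strategy R S A) : strategy R S A :=
  fun p a => if visited p then (a == stay (lst p))%:R else sg p a.

Lemma stay_act y : stay y \in act M y.
Proof.
rewrite /stay; case: (pickP (fun a => goodW a y)) => [a /andP[aA _] //|_] /=.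
case: pickP => [a //|h] /=.
by have [/set0Pn [a aA] _] := wfM y; move: (h a) => /negbT /negP.
Qed.

Lemma stay_good y : y \in W -> goodW (stay y) y.
Proof.
move=> yW; have [a [aA hTh]] := Wc yW.
have ga : goodW a y by rewrite /goodW aA; apply/forallP => Th; apply/implyP; apply: hTh.
by rewrite /stay; case: (pickP (fun a => goodW a y)) => [b //|/(_ a)]; rewrite ga.
Qed.

Lemma sgW_strat sg : is_strategy M sg -> is_strategy M (sgW sg).
Proof.
move=> sgS p; rewrite /sgW; case: (visited p); last exact: sgS.
split.
- by move=> a; rewrite ler0n.
- move=> a aA; have /negbTE -> // : a != stay (lst p).
  by apply: contraNneq aA => ->; exact: stay_act.
- by rewrite (bigD1 (stay (lst p))) //= eqxx big1 ?addr0 // => a /negbTE ->.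
Qed.

Variables (sg : strategy R S A) (ga : nature R S A) (x : S).
Hypotheses (sgS : is_strategy M sg) (gaN : is_nature M ga).

Local Notation sg' := (sgW sg).
Let sgS' := sgW_strat sgS.

Lemma visited_ext h t : visited (x, h) -> visited (x, h ++ t).
Proof.
move=> /existsP [m mW].
have mlt : (m < (size (h ++ t)).+1)%N.
  by rewrite size_cat ltnS (leq_trans _ (leq_addr _ _)) // -ltnS.
by apply/existsP; exists (Ordinal mlt); rewrite /= state_cat // -ltnS.
Qed.

Lemma agree n h : G sg' ga x h n (fun t => (visited (x, t))%:R) =
                  G sg ga x h n (fun t => (visited (x, t))%:R).
Proof.
elim: n h => [|n IH] h; first by rewrite !G0.
case: (boolP (visited (x, h))) => vh.
  rewrite (G_ext_const wfM x sgS' gaN (c := 1)) ?(G_ext_const wfM x sgS gaN (c := 1)) //.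
    by move=> t _; rewrite visited_ext.
  by move=> t _; rewrite visited_ext.
rewrite !GS; apply: eq_bigr => st _; rewrite IH /sgW (negbTE vh).
by [].
Qed.

Definition Inv (h : seq (A * S)) : Prop := forall m m', (m <= m' <= size h)%N ->
  state x h m \in W -> state x h m' \in W.

Lemma Inv_step h a s : Inv h -> sg' (x, h) a * ga (x, h) a s != 0 -> Inv (rcons h (a, s)).
Proof.
move=> ih wn m m' /andP[mm' m'h] mW.
have cat1 : rcons h (a, s) = h ++ [:: (a, s)] by rewrite cats1.
move: m'h; rewrite size_rcons leq_eqVlt => /orP[/eqP em'|]; last first.
  rewrite ltnS => m'h; move: mW; rewrite cat1 !state_cat //; last exact: leq_trans mm' m'h.
  by move=> mW; apply: (ih m); rewrite ?mm'.
rewrite em'; have -> : state x (rcons h (a, s)) (size h).+1 = s by apply: state_rcons.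
move: mm'; rewrite em' leq_eqVlt => /orP[/eqP em|].
  by move: mW; rewrite em state_rcons.
rewrite ltnS => mh; move: mW; rewrite cat1 state_cat // => mW.
have lW : lst (x, h) \in W by rewrite lst_state; apply: (ih m) => //; rewrite mh leqnn.
have vh : visited (x, h).
  by apply/existsP; exists (Ordinal (mh : (m < (size h).+1)%N)).
have [sg0 aA sP] := w_info sgS' gaN wn.
have ea : a = stay (lst (x, h)).
  by move: sg0; rewrite /sgW vh; case: eqP => // _; rewrite ltxx.
move: sP; rewrite inE => /existsP [Th /andP[ThT /andP[_ sTh]]].
have := stay_good lW; rewrite /goodW => /andP[_ /forallP /(_ Th)].
by rewrite -ea ThT /= => /subsetP; apply.
Qed.

Lemma alw_bound N Mh : (N <= Mh)%N ->
  prN sg ga x N (fun t => [exists m : 'I_N.+1, state x t m \in W]) <=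
  prN sg' ga x Mh (fun t => [forall m : 'I_Mh.+1, (N <= m)%N ==> (state x t m \in W)]).
Proof.
move=> NM; rewrite !prN_G -(subnKC NM) Gsplit.
have -> : G sg ga x [::] N (fun t => [exists m : 'I_N.+1, state x t m \in W]%:R) =
  G sg ga x [::] N (fun t => (visited (x, t))%:R).
  by apply: G_eq_ext => t st; rewrite /visited /= st.
rewrite -agree.
apply: (Gmono wfM sgS' gaN (P := Inv)) => //.
- by move=> h a s; apply: Inv_step.
- by move=> m m'; rewrite leqn0 andbC => /andP[/eqP -> ]; rewrite leqn0 => /eqP ->.
move=> t st it /=.
case: (boolP (visited (x, t))) => [/existsP [m mW]|_]; last first.
  by apply: (G_ge0 wfM x sgS' gaN) => u; apply: ler0n.
rewrite -[X in X <= _](Gconst wfM x sgS' gaN t (Mh - N) 1).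
apply: (Gmono wfM sgS' gaN (P := Inv)) => //.
  by move=> h a s; apply: Inv_step.
move=> u su iu; rewrite ler1n lt0b; apply/forallP => m'; apply/implyP => Nm'.
have mt : (m <= size t)%N by have := ltn_ord m.
apply: (iu m); last by rewrite state_cat.
have m'M : (m' <= N + (Mh - N))%N by have := ltn_ord m'.
have e : (size t + (Mh - N) = N + (Mh - N))%N by rewrite st.
have mN : (m <= N)%N by rewrite -st.
by rewrite size_cat su e m'M (leq_trans mN Nm').
Qed.


Lemma ev_le_alw : prEv sg ga x W <= prEvAlw sg' ga x W.
Proof.
rewrite /prEv; apply: range_ub => N.
rewrite /prEvAlw.
apply: le_trans (_ : inf (range (fun Mh => prN sg' ga x Mh
   (fun t => [forall m : 'I_Mh.+1, (N <= m)%N ==> (state x t m \in W)]))) <= _).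
  apply: range_lb => Mh; case: (leqP N Mh) => [NM|MN]; first exact: alw_bound.
  have /andP[_ p1] := prN01 wfM x N (fun t => [exists m : 'I_N.+1, state x t m \in W]) sgS gaN.
  apply: le_trans p1 _; rewrite prN_G (G_ext_const wfM x sgS' gaN (c := 1)) // => t _.
  apply/eqP; rewrite pnatr_eq1 eqb1; apply/forallP => m; apply/implyP => Nm.
  by have := leq_ltn_trans Nm (ltn_ord m); rewrite ltnS leqNgt MN.
apply: (le_sup_range (c := 1)) => n.
by have /andP[] := inf01 (fun N0 => prN01 wfM x N0 (fun t => [forall m : 'I_N0.+1, (n <= m)%N ==> (state x t m \in W)]) sgS' gaN).
Qed.

Lemma alw_le_ev : prEvAlw sg ga x W <= prEv sg ga x W.
Proof.
apply: range_ub => n.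
apply: le_trans (inf_le_range n (c := 0) _) _.
  by move=> N; have /andP[] := prN01 wfM x N (fun t => [forall m : 'I_N.+1, (n <= m)%N ==> (state x t m \in W)]) sgS gaN.
apply: le_trans (_ : prN sg ga x n (fun t => [exists m : 'I_n.+1, state x t m \in W]) <= _).
  rewrite !prN_G; apply: (Gmono wfM sgS gaN (P := fun _ => True)) => // t _ _.
  rewrite ler_nat; case: (boolP [exists m : 'I_n.+1, state x t m \in W]) => [_|ne].
    by rewrite leq_b1.
  rewrite leqn0 eqb0; apply/negP => /forallP /(_ ord_max); rewrite leqnn /= => mW.
  by move/existsP: ne; apply; exists ord_max.
apply: (le_sup_range (c := 1)) => N.
by have /andP[] := prN01 wfM x N (fun t => [exists m : 'I_N.+1, state x t m \in W]) sgS gaN.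
Qed.

End Alw.

Theorem value_eq (R : realType) (S A : finType) (M : mdpst R S A) (W : {set S}) x0 :
  wf_mdpst M ->
  (forall y, y \in W -> exists a, a \in act M y /\ forall Th, Th \in trans M y a -> Th \subset W) ->
  value M x0 (fun sg ga x => prEvAlw sg ga x W) = value M x0 (fun sg ga x => prEv sg ga x W).
Proof.
move=> wfM Wc; have [a0 _] := exist_a0 wfM.
apply/eqP; rewrite eq_le; apply/andP; split.
  apply: (value_le wfM).
  - by move=> sg ga sgS gaN; apply: prEvAlw01.
  - by move=> sg ga sgS gaN; apply: prEv01.
  move=> sg sgS; exists sg => // ga gaN; exact: (alw_le_ev wfM W x0 sgS gaN).
apply: (value_le wfM).
- by move=> sg ga sgS gaN; apply: prEv01.
- by move=> sg ga sgS gaN; apply: prEvAlw01.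
move=> sg sgS; exists (sgW M W a0 sg); first exact: sgW_strat.
by move=> ga gaN; apply: (ev_le_alw wfM Wc a0 x0 sgS gaN).
Qed.

Lemma compW_final (R : realType) (S A : finType) (M : mdpst R S A) Sp Acc W :
  compW M Sp Acc W -> W = set0 \/ exists (Sp' Acc' : {set S}) (V Vout : S -> R),
    [/\ Acc' \subset Acc, is_lfp M Sp' Acc' V Vout, (forall x, x \in Acc' -> Vout x = 1)
      & W = nextSp Sp' Acc' V Vout].
Proof.
elim=> {Sp Acc W} [Sp Acc _|Sp Acc V Vout _ lfp h|Sp Acc V Vout W _ lfp _ _ [->|IH]].
- by left.
- by right; exists Sp, Acc, V, Vout; split.
- by left.
right; move: IH => [Sp' [Acc' [V' [Vout' [sub l h e]]]]].
exists Sp', Acc', V', Vout'; split=> //; apply: subset_trans sub _.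
by apply/subsetP => y; rewrite inE => /andP[].
Qed.

Theorem gen (R : realType) (S A : finType) (M : mdpst R S A) (AccX W : {set S}) :
  wf_mdpst M -> computeW M AccX W ->
  (forall x, x \in W -> exists sg, is_strategy M sg /\
       forall ga, is_nature M ga -> prBuchi sg ga x AccX = 1) /\
  value M (init M) (fun sg ga x => prEvAlw sg ga x W)
  = value M (init M) (fun sg ga x => prEv sg ga x W).
Proof.
move=> wfM /compW_final [->|[Sp [Acc [V [Vout [sub lfp h e]]]]]].
  split; first by move=> x; rewrite inE.
  by apply: value_eq => // y; rewrite inE.
have AccS : Acc \subset AccX by apply: subset_trans sub (subsetIl _ _).
subst W; split.
  move=> x xW; have [a0 _] := exist_a0 wfM.
  exists (sgp M Sp Acc V Vout a0); split; first exact: sgp_strat.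
  by move=> ga gaN; apply: (win_buchi wfM lfp h a0 gaN AccS xW).
apply: value_eq => // y yW; exact: (W_good wfM lfp h yW).
Qed.

Lemma wf_product (R : realType) (S A AP Qi Qa : finType)
    (M : mdpst R S A) (L : S -> {set AP}) (B : ldba AP Qi Qa) :
  wf_mdpst M -> wf_mdpst (product M L B).
Proof.
move=> wfM [s q]; have [/set0Pn [a0 a0A] hact] := wfM s.
split.
  apply/set0Pn; exists (inl a0); rewrite /= /pact in_setU; apply/orP; left.
  by apply/imsetP; exists a0.
case=> [a|q'] /= bA.
  have aA : a \in act M s.
    move: bA; rewrite /pact in_setU => /orP[/imsetP [a' a'A [->]] //|].
    by case: q => [qi|qa] //=; [case/imsetP|rewrite in_set0].
  have [/set0Pn [Th0 Th0T] hTh psum] := hact a aA.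
  set q1 := delta B q (L s).
  have inj : {in trans M s a &, injective (fun Th => setX Th [set q1])}.
    move=> T1 T2 _ _ e; apply/setP => z.
    by have := congr1 (fun X : {set S * Q Qi Qa} => (z, q1) \in X) e; rewrite /= !in_setX !in_set1 eqxx !andbT.
  have eqT Th : [set s0 | (s0, q1) \in setX Th [set q1]] = Th.
    by apply/setP => z; rewrite !inE eqxx andbT.
  split.
  - by apply/set0Pn; exists (setX Th0 [set q1]); apply/imsetP; exists Th0.
  - move=> Th' /imsetP [Th ThT ->]; have [/set0Pn [z zTh] pb] := hTh Th ThT.
    split; first by apply/set0Pn; exists (z, q1); rewrite in_setX in_set1 zTh eqxx.
    by rewrite /pprob /= -/q1 eqT.
  - rewrite big_imset //=; rewrite -psum; apply: eq_bigr => Th _.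
    by rewrite /pprob /= -/q1 eqT.
rewrite /ptrans bA; split.
- by apply/set0Pn; exists [set (s, q')]; rewrite in_set1.
- by move=> Th'; rewrite in_set1 => /eqP ->; split; [apply/set0Pn; exists (s, q'); rewrite in_set1|rewrite /pprob ltr01 lexx].
- by rewrite big_set1.
Qed.

Theorem mainTheorem2 (R : realType) (S A AP Qi Qa : finType)
    (M : mdpst R S A) (L : S -> {set AP}) (B : ldba AP Qi Qa)
    (W : {set (S * Q Qi Qa)%type}) :
  wf_mdpst M ->
  computeW (product M L B) (accX B) W ->
  (forall x, x \in W ->
     exists sg, is_strategy (product M L B) sg /\
       forall ga, is_nature (product M L B) ga ->
         prBuchi sg ga x (accX B) = 1) /\
  value (product M L B) (init (product M L B)) (fun sg ga x => prEvAlw sg ga x W)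
  = value (product M L B) (init (product M L B)) (fun sg ga x => prEv sg ga x W).
Proof.
move=> wfM hc; exact: (gen (wf_product L B wfM) hc).
Qed.
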